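(* Let $k$ be a field of characteristic $p>0$, $k'/k$ a finite purely inseparable field extension with normal generating sequence $\alpha_1,\ldots,\alpha_l$ and sequence of exponents $e_1,\dots,e_l$. Let $\mathfrak B:=k'\otimes_k k'$, $\mathfrak m$ the kernel of the multiplication map $\mathfrak B\to k'$, $a\otimes b\mapsto ab$, and $a_i:=1\otimes\alpha_i-\alpha_i\otimes 1\in\mathfrak m$. Regard $k'\subseteq\mathfrak B$ via $x\mapsto x\otimes 1$. Then: (i) $\mathfrak m$ is generated by $a_1,\dots,a_l$ over $k'$; namely $\mathfrak m=\mathfrak m\cap k'[a_1,\dots,a_l]$, i.e. every element of $\mathfrak m$ is a polynomial in $a_1,\dots,a_l$ with coefficients in $k'$; (ii) for each $1\le i\le l$, the $p^{e_i}$-power map takes $\mathfrak m$ into $k'[a_1^{p^{e_i}},\dots,a_{i-1}^{p^{e_i}}]\cap\mathfrak m$.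
   Context: For a tower $k'/k''/k$ and $x\in k'$, $e_{k''}(x)$ is the least $s$ with $x^{p^s}\in k''$; $x$ is normal in $k'/k''$ if $e_{k''}(x)\geq e_{k''}(y)$ for all $y\in k'$. A normal generating sequence of $k'/k$ is $\alpha_1,\dots,\alpha_l\in k'$ such that, with $k_i=k[\alpha_1,\dots,\alpha_i]$, each $\alpha_i$ is normal in $k'/k_{i-1}$, $\alpha_i\notin k_{i-1}$, and $k_l=k'$; its sequence of exponents is $e_i:=e_{k_{i-1}}(\alpha_i)$. *)

(* Defs.v *)
From HB Require Import structures.
From mathcomp Require Import all_boot all_order all_algebra all_field.
From mathcomp Require Import mpoly.
Set Implicit Arguments. Unset Strict Implicit. Unset Printing Implicit Defensive.
Import GRing.Theory.
Local Open Scope ring_scope.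

Section PurelyInsep.
Variables (F : fieldType) (L : fieldExtType F) (p : nat).

Definition kpref (l : nat) (alpha : l.-tuple L) (i : nat) : {vspace L} :=
  <<1 & take i alpha>>%VS.

Definition is_exponent (K : {vspace L}) (x : L) (s : nat) : Prop :=
  x ^+ (p ^ s) \in K /\ (forall t, (t < s)%N -> x ^+ (p ^ t) \notin K).

Definition normal_in (K : {vspace L}) (x : L) : Prop :=
  exists s, is_exponent K x s /\
    (forall (y : L) (t : nat), is_exponent K y t -> (t <= s)%N).

Definition normal_generating_sequence (l : nat) (alpha : l.-tuple L) : Prop :=
  (forall i : 'I_l, normal_in (kpref alpha i) (tnth alpha i) /\
                    tnth alpha i \notin kpref alpha i)
  /\ kpref alpha l = fullv.

Definition exponent_sequence (l : nat) (alpha : l.-tuple L) (e : 'I_l -> nat) :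
  Prop := forall i : 'I_l, is_exponent (kpref alpha i) (tnth alpha i) (e i).

End PurelyInsep.

(* B together with i1 (x |-> x (x) 1) and i2 (x |-> 1 (x) x) is the tensor
   product L (x)_F L, characterized by its universal property as the
   coproduct of two copies of L in the category of commutative F-algebras. *)
Definition is_tensor_square (F : fieldType) (L : fieldExtType F)
    (B : comNzRingType) (i1 i2 : {rmorphism L -> B}) : Prop :=
  (forall c : F, i1 (c%:A) = i2 (c%:A)) /\
  (forall (R : comNzRingType) (f g : {rmorphism L -> R}),
     (forall c : F, f (c%:A) = g (c%:A)) ->
     exists h : {rmorphism B -> R},
       [/\ forall x, h (i1 x) = f x, forall x, h (i2 x) = g x &
           forall h' : {rmorphism B -> R},
             (forall x, h' (i1 x) = f x) -> (forall x, h' (i2 x) = g x) ->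
             h' =1 h]).

(* Main.v *)
Require Import Defs.
From HB Require Import structures.
From mathcomp Require Import all_boot all_order all_algebra all_field.
From mathcomp Require Import mpoly.
From mathcomp Require Import zify.
From Stdlib Require Import ClassicalEpsilon.
Import GRing.Theory.
Local Open Scope ring_scope.

Set Implicit Arguments. Unset Strict Implicit. Unset Printing Implicit Defensive.

Section Frob.
Variables (R : comNzRingType) (p : nat) (hp : p \in [pchar R]) (k : nat).
Definition frobk := let _ := hp in fun x : R => x ^+ (p ^ k).
Lemma pnat_pk : [pchar R].-nat (p ^ k)%N.
Proof.
rewrite pnatX; apply/orP; left.
by rewrite pnatE ?(pcharf_prime hp).
Qed.
Lemma pk_gt0 : (0 < p ^ k)%N.
Proof. by rewrite expn_gt0 prime_gt0 ?(pcharf_prime hp). Qed.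
Lemma frobk_nmod : nmod_morphism frobk.
Proof.
split=> [|x y]; rewrite /frobk; first by rewrite expr0n gtn_eqF ?pk_gt0.
exact: exprDn_pchar pnat_pk.
Qed.
Lemma frobk_mon : monoid_morphism frobk.
Proof. by split=> [|x y]; rewrite /frobk ?expr1n ?exprMn. Qed.
HB.instance Definition _ := GRing.isNmodMorphism.Build R R frobk frobk_nmod.
HB.instance Definition _ := GRing.isMonoidMorphism.Build R R frobk frobk_mon.
End Frob.

Lemma frobkB (R : comNzRingType) p (hp : p \in [pchar R]) k (x y : R) :
  (x - y) ^+ (p ^ k) = x ^+ (p ^ k) - y ^+ (p ^ k).
by have := rmorphB (frobk hp k) x y. Qed.


Definition pb (P : Prop) : bool := if excluded_middle_informative P then true else false.
Lemma pbP P : reflect P (pb P).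
Proof. rewrite /pb; case: excluded_middle_informative => H; constructor; done. Qed.

Section Gen.
Variables (F : fieldType) (L : fieldExtType F) (B : comNzRingType)
  (i1 i2 : {rmorphism L -> B}) (S : B -> Prop).
Hypotheses (S1 : S 1) (SB : forall x y, S x -> S y -> S (x - y))
  (SM : forall x y, S x -> S y -> S (x * y)) (Si1 : forall x, S (i1 x))
  (Si2 : forall x, S (i2 x)).

Definition Sb : pred B := fun b => pb (S b).
Lemma Sb_closed : subring_closed Sb.
Proof.
split; first by apply/pbP.
- by move=> x y /pbP Sx /pbP Sy; apply/pbP; apply: SB.
- by move=> x y /pbP Sx /pbP Sy; apply/pbP; apply: SM.
Qed.

Record Ssub := SSub { sval : B; sval_in : sval \in Sb }.
HB.instance Definition _ := [isSub for sval].
HB.instance Definition _ := [Choice of Ssub by <:].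
HB.instance Definition _ := GRing.SubChoice_isSubComNzRing.Build B Sb Ssub Sb_closed.

Definition f1 (x : L) : Ssub := SSub (introT (pbP _) (Si1 x)).
Definition f2 (x : L) : Ssub := SSub (introT (pbP _) (Si2 x)).

Lemma f1_nmod : nmod_morphism f1.
Proof. by split=> [|x y]; apply: val_inj; rewrite /= ?rmorph0 ?rmorphD. Qed.
Lemma f1_mon : monoid_morphism f1.
Proof. by split=> [|x y]; apply: val_inj; rewrite /= ?rmorph1 ?rmorphM. Qed.
HB.instance Definition _ := GRing.isNmodMorphism.Build L Ssub f1 f1_nmod.
HB.instance Definition _ := GRing.isMonoidMorphism.Build L Ssub f1 f1_mon.
Lemma f2_nmod : nmod_morphism f2.
Proof. by split=> [|x y]; apply: val_inj; rewrite /= ?rmorph0 ?rmorphD. Qed.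
Lemma f2_mon : monoid_morphism f2.
Proof. by split=> [|x y]; apply: val_inj; rewrite /= ?rmorph1 ?rmorphM. Qed.
HB.instance Definition _ := GRing.isNmodMorphism.Build L Ssub f2 f2_nmod.
HB.instance Definition _ := GRing.isMonoidMorphism.Build L Ssub f2 f2_mon.

Lemma gen_all : is_tensor_square i1 i2 -> forall b, S b.
Proof.
move=> [t1 t2] b.
have hf : forall c, f1 c%:A = f2 c%:A by move=> c; apply: val_inj; exact: t1.
have [h [h1 h2 _]] := t2 _ f1 f2 hf.
have [h0 [_ _ uniq]] := t2 _ i1 i2 t1.
have e1 := uniq idfun (fun x => erefl) (fun x => erefl).
have e2 : (val \o h) =1 h0 by apply: uniq => x /=; rewrite ?h1 ?h2.
have -> : b = val (h b) by rewrite -[LHS]/(idfun b) (e1 b) -(e2 b).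
by apply/pbP; exact: (valP (h b)).
Qed.
End Gen.


Section Field.
Variables (F : fieldType) (L : fieldExtType F) (p : nat) (pcL : p \in [pchar L]).

Lemma frob_adj1 (K M : {subfield L}) x k :
  (forall c, c \in K -> c ^+ (p ^ k) \in M) -> x ^+ (p ^ k) \in M ->
  forall y, y \in <<K; x>>%VS -> y ^+ (p ^ k) \in M.
Proof.
move=> hK hx y /Fadjoin_polyP [P PK ->].
rewrite -[_ ^+ _]/(frobk pcL k P.[x]) -horner_map /=.
apply: rpred_horner; last exact hx.
apply/polyOverP => i; rewrite coef_map /=; apply hK; exact: (polyOverP PK).
Qed.

Lemma frob_adjs (M : {subfield L}) k s : forall K : {subfield L},
  (forall c, c \in K -> c ^+ (p ^ k) \in M) ->
  (forall x, x \in s -> x ^+ (p ^ k) \in M) ->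
  forall y, y \in <<K & s>>%VS -> y ^+ (p ^ k) \in M.
Proof.
elim: s => [|x s IH] K hK hs y.
  by rewrite Fadjoin_nil; apply: hK.
rewrite adjoin_cons => hy.
apply: (IH <<K; x>>%AS) hy => [c|z zs]; last by apply: hs; rewrite inE zs orbT.
by apply: frob_adj1 => //; apply: hs; rewrite mem_head.
Qed.

Lemma dim_insep (K : {subfield L}) e : forall x, x ^+ (p ^ e) \in K ->
  (forall t, (t < e)%N -> x ^+ (p ^ t) \notin K) ->
  \dim <<K; x>> = (p ^ e * \dim K)%N.
Proof.
elim: e => [|e IH] x hx hmin.
  by rewrite expn0 mul1n (Fadjoin_idP _) //; rewrite expn0 expr1 in hx.
have pp := pcharf_prime pcL.
set y := x ^+ p.
have hy : y ^+ (p ^ e) \in K by rewrite -exprM -expnS.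
have hymin : forall t, (t < e)%N -> y ^+ (p ^ t) \notin K.
  by move=> t lt; rewrite -exprM -expnS hmin.
have dy := IH y hy hymin.
have xK : x \notin K by have := hmin 0%N isT; rewrite expn0 expr1.
have xnKy : x \notin <<K; y>>%VS.
  apply: contra xK => xKy.
  have sep : separable_element K x by rewrite (pcharf_p_separable _ _ 0 pcL) expn1.
  have ins : purely_inseparable_element K x.
    apply/purely_inseparable_elementP_pchar; exists (p ^ e.+1)%N => //.
    exact: pnat_pk.
  by rewrite -separable_inseparable_element sep ins.
have eqKx : <<K; x>>%VS = << <<K; y>>; x>>%VS.
  apply/eqP; rewrite eqEsubv; apply/andP; split.
    apply/FadjoinP; split; last exact: memv_adjoin.
    exact: subv_trans (subv_adjoin K y) (subv_adjoin _ x).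
  apply/FadjoinP; split; last exact: memv_adjoin.
  apply/FadjoinP; split; first exact: subv_adjoin.
  by rewrite rpredX // memv_adjoin.
set K' := <<K; y>>%AS.
have dpx : adjoin_degree K' x = p.
  have le : (adjoin_degree K' x <= p)%N.
    have nz : 'X^p - y%:P != 0 :> {poly L}.
      by rewrite -size_poly_eq0 size_XnsubC ?prime_gt0.
    have Pover : 'X^p - y%:P \is a polyOver K'.
      by rewrite rpredB ?rpredX ?polyOverX ?polyOverC ?memv_adjoin.
    have rt : root ('X^p - y%:P) x by rewrite rootE !hornerE subrr.
    have := dvdp_leq nz (minPoly_dvdp Pover rt).
    by rewrite size_minPoly size_XnsubC ?prime_gt0.
  have nsep : ~~ separable_element K' x.
    rewrite (pcharf_p_separable _ _ 0 pcL) expn1.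
    have -> : <<K'; x ^+ p>>%VS = K' by apply/Fadjoin_idP; exact: memv_adjoin.
    exact: xnKy.
  have dv : (p %| adjoin_degree K' x)%N.
    rewrite separable_nz_der negbK in nsep.
    move: nsep => /eqP der.
    set n := adjoin_degree K' x in le *.
    have n_gt0 : (0 < n)%N by rewrite /n /adjoin_degree.
    have := coef_deriv (minPoly K' x) n.-1.
    rewrite der coef0 prednK //.
    have -> : (minPoly K' x)`_n = 1.
      by rewrite -(monicP (monic_minPoly K' x)) lead_coefE size_minPoly.
    by move=> /esym /eqP; rewrite -(dvdn_pcharf pcL).
  have n_gt0 : (0 < adjoin_degree K' x)%N by [].
  apply/eqP; rewrite eqn_leq le /=; exact: dvdn_leq.
rewrite eqKx dim_Fadjoin dpx /= dy expnS mulnA //.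
Qed.

Lemma deg_zero (K : {subfield L}) x e (Q : {poly L}) : x ^+ (p ^ e) \in K ->
  (forall t, (t < e)%N -> x ^+ (p ^ t) \notin K) ->
  Q \is a polyOver K -> root Q x -> (size Q <= p ^ e)%N -> Q = 0.
Proof.
move=> hx hmin QK rt sz; apply/eqP; apply: contraTT sz => nz; rewrite -ltnNge.
have := dvdp_leq nz (minPoly_dvdp QK rt).
by rewrite size_minPoly adjoin_degreeE (dim_insep hx hmin) mulnK ?adim_gt0.
Qed.


Definition pw (n : nat) (y : L) := y ^+ n.

Definition bnd (K : {vspace L}) e := forall y : L, y ^+ (p ^ e) \in K.

Lemma key (e : nat) (s : seq L) : forall E : {subfield L},
  (forall k, (k < size s)%N -> exists ek, [/\ (e <= ek)%N,
       bnd <<E & take k s>>%VS ek & is_exponent p <<E & take k s>>%VS (nth 0 s k) ek]) ->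
  forall x, x ^+ (p ^ e) \in <<E & s>>%VS ->
  x ^+ (p ^ e) \in <<E & map (pw (p ^ e)) s>>%VS.
Proof.
elim: s => [|x0 s IH] E H x hx; first by [].
have [e0 [le0 b0 [ex0 mn0]]] := H 0%N isT.
rewrite take0 Fadjoin_nil /= in b0 ex0 mn0.
set q := (p ^ e)%N.
set M := <<E & map (pw q) (x0 :: s)>>%AS.
have hIH : x ^+ q \in <<<<E; x0>>%AS & map (pw q) s>>%VS.
  apply: IH; last by rewrite -adjoin_cons.
  move=> k lt; have [ek [lek bk ek_]] := H k.+1 lt.
  by exists ek; rewrite -adjoin_cons.
have sub : (<<<<E; x0>>%AS & map (pw q) s>> <= <<M; x0>>)%VS.
  apply/Fadjoin_seqP; split.
    apply/FadjoinP; split; last exact: memv_adjoin.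
    exact: subv_trans (subv_adjoin_seq _ _) (subv_adjoin _ _).
  move=> z zs; apply: subvP (subv_adjoin M x0) _ _.
  by apply: seqv_sub_adjoin; rewrite /= inE zs orbT.
have hb : x ^+ q \in <<M; x0>>%VS := subvP sub _ hIH.
have x0qM : x0 ^+ q \in M by apply: seqv_sub_adjoin; rewrite /= mem_head.
set C := Fadjoin_poly M x0 (x ^+ q).
have q_gt0 : (0 < q)%N := pk_gt0 pcL e.
have szC : (size C <= q)%N.
  apply: leq_trans (size_Fadjoin_poly _ _ _) _.
  have nz : 'X^q - (x0 ^+ q)%:P != 0 :> {poly L}.
    by rewrite -size_poly_eq0 size_XnsubC.
  have Pover : 'X^q - (x0 ^+ q)%:P \is a polyOver M.
    by rewrite rpredB ?rpredX ?polyOverX ?polyOverC.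
  have rt : root ('X^q - (x0 ^+ q)%:P) x0 by rewrite rootE !hornerE subrr.
  have := dvdp_leq nz (minPoly_dvdp Pover rt).
  by rewrite size_minPoly size_XnsubC.
set r := (p ^ (e0 - e))%N.
have qr : (q * r = p ^ e0)%N by rewrite -expnD subnKC.
have r_gt0 : (0 < r)%N := pk_gt0 pcL _.
have CE : forall j, C`_j ^+ r \in E.
  move=> j; apply: (@frob_adjs E (e0 - e) (map (pw q) (x0 :: s)) E) => [c cE|z|].
  - exact: rpredX.
  - by move=> /mapP [y _ ->]; rewrite /pw -exprM qr; exact: b0.
  - exact: (polyOverP (Fadjoin_polyOver _ _ _)).
set Q := map_poly (frobk pcL (e0 - e)) C \Po 'X^r - ((x ^+ q) ^+ r)%:P.
have Q0 : Q = 0.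
  apply: (deg_zero ex0 mn0).
  - rewrite rpredB ?polyOverC //; last by rewrite -exprM qr b0.
    apply: polyOver_comp; last exact: rpredX (polyOverX _).
    by apply/polyOverP => i; rewrite coef_map; exact: CE.
  - rewrite rootE hornerD hornerN hornerC horner_comp hornerXn.
    rewrite -[x0 ^+ r]/(frobk pcL (e0 - e) x0) horner_map Fadjoin_poly_eq //.
    by rewrite subrr.
  - rewrite -qr; apply: leq_trans (size_add _ _) _.
    rewrite size_opp size_polyC geq_max; apply/andP; split.
      apply: leq_trans (size_comp_poly_leq _ _) _.
      rewrite size_polyXn size_map_poly /=.
      have : ((size C).-1 <= q.-1)%N by rewrite -subn1 -(subn1 q) leq_sub2r.
      by move=> h; apply: (leq_ltn_trans (leq_mul h (leqnn r))); rewrite ltn_mul2r r_gt0 /= ltn_predL.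
    by apply: leq_trans (leq_b1 _) _; rewrite muln_gt0 q_gt0 r_gt0.
have Cj0 : forall j, (0 < j)%N -> (j < q)%N -> C`_j = 0.
  move=> j j0 jq.
  have := congr1 (fun P : {poly L} => P`_(j * r)) Q0.
  rewrite /Q coefB coef_comp_poly_Xn // dvdn_mull // mulnK // coefC coef_map /=.
  rewrite muln_eq0 (gtn_eqF j0) (gtn_eqF r_gt0) subr0 coef0 /frobk /=.
  by move/eqP; rewrite expf_eq0 r_gt0 /= => /eqP.
have -> : x ^+ q = C`_0.
  rewrite -(Fadjoin_poly_eq hb) -/C (horner_coef_wide _ szC).
  rewrite -(prednK q_gt0) big_ord_recl /= expr0 mulr1 big1 ?addr0 // => i _.
  rewrite Cj0 ?mul0r // /bump leq0n add1n // -ltn_predRL ltn_ord //. 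
exact: (polyOverP (Fadjoin_polyOver _ _ _)).
Qed.

End Field.


Section Main.
Variables (F : fieldType) (L : fieldExtType F) (p : nat) (pcL : p \in [pchar L]).
Variable (insep : purely_inseparable (1%VS : {vspace L}) fullv).
Variables (l : nat) (alpha : l.-tuple L) (e : 'I_l -> nat).
Hypotheses (normal_seq : normal_generating_sequence p alpha)
  (exps : exponent_sequence p alpha e).

Lemma exp_uniq (K : {vspace L}) x s t :
  is_exponent p K x s -> is_exponent p K x t -> s = t.
Proof.
move=> [hs ms] [ht mt]; case: (ltngtP s t) => // lt.
- by move: (mt _ lt); rewrite hs.
- by move: (ms _ lt); rewrite ht.
Qed.

Lemma bnd_of (K : {subfield L}) x s : is_exponent p K x s ->
  (forall y t, is_exponent p K y t -> (t <= s)%N) -> bnd p K s.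
Proof.
move=> _ hmax y.
have : purely_inseparable_element K y.
  apply: (@sub_inseparable _ _ 1%AS); first exact: sub1v.
  by move/purely_inseparableP: insep; apply; exact: memvf.
case/purely_inseparable_elementP_pchar => n hn hyn.
have : p.-nat n by rewrite -(eq_pnat _ (pcharf_eq pcL)).
case/p_natP => m nE; subst n.
have ex : exists m, y ^+ (p ^ m) \in K by exists m.
case: (ex_minnP ex) => t ht tmin.
have te : is_exponent p K y t.
  split=> // u ut; apply/negP => hu; have := tmin u hu; by rewrite leqNgt ut.
have ts := hmax _ _ te.
by rewrite -(subnKC ts) expnD exprM rpredX.
Qed.

Lemma facts (j : 'I_l) : bnd p (kpref alpha j) (e j) /\
  is_exponent p (kpref alpha j) (tnth alpha j) (e j).
Proof.
have [[s [hs hmax]] _] := normal_seq.1 j.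
have := exps j => he.
rewrite -(exp_uniq hs he); split => //.
exact: (@bnd_of <<1 & take j alpha>>%AS _ _ hs hmax).
Qed.

Lemma kpref_mono (i j : nat) : (i <= j)%N ->
  (kpref alpha i <= kpref alpha j)%VS.
Proof.
move=> ij; apply/Fadjoin_seqP; split; first exact: (sub1v <<1 & take j alpha>>%AS).
move=> z zi; apply: seqv_sub_adjoin.
by rewrite -(take_takel _ ij) in zi; exact: mem_take zi.
Qed.

Lemma anti (i j : 'I_l) : (i <= j)%N -> (e j <= e i)%N.
Proof.
move=> ij; rewrite leqNgt; apply/negP => lt.
have [bi _] := facts i; have [_ [_ mj]] := facts j.
by move: (mj _ lt); rewrite (subvP (kpref_mono ij)) // bi.
Qed.

Lemma key_app (j : 'I_l) :
  tnth alpha j ^+ (p ^ e j) \in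
    <<1 & map (pw (p ^ e j)) (take j alpha)>>%VS.
Proof.
have [_ [hj _]] := facts j.
apply: (@key _ _ _ pcL (e j) (take j alpha) 1%AS); last exact: hj.
move=> k; rewrite size_takel; last by rewrite size_tuple; exact: ltnW.
move=> kj.
have kl : (k < l)%N by apply: ltn_trans kj _.
have [bk ek] := facts (Ordinal kl).
exists (e (Ordinal kl)); split.
- by apply: anti; exact: ltnW.
- by rewrite take_takel //; exact: ltnW.
- rewrite take_takel; last exact: ltnW.
  by rewrite nth_take //; move: ek; rewrite /kpref (tnth_nth 0).
Qed.

Lemma powq (i : 'I_l) y :
  y ^+ (p ^ e i) \in <<1 & map (pw (p ^ e i)) (take i alpha)>>%VS.
Proof.
set q := (p ^ e i)%N.
set Mi := <<1 & map (pw q) (take i alpha)>>%AS.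
have base : forall c, c \in (1%AS : {subfield L}) -> c ^+ q \in Mi.
  by move=> c c1; apply: subvP (sub1v Mi) _ _; rewrite rpredX.
suff claim : forall d, (i + d <= l)%N ->
    forall z, z \in <<1 & take (i + d) alpha>>%VS -> z ^+ q \in Mi.
  apply: (claim (l - i)%N); first by rewrite subnKC // ltnW.
  have := normal_seq.2; rewrite /kpref subnKC; last exact: ltnW. move=> ->.
  exact: memvf.
elim=> [|d IH] hd z.
  rewrite addn0; apply: (@frob_adjs _ _ _ pcL Mi (e i) _ 1%AS) => // x xi.
  by apply: seqv_sub_adjoin; exact: (map_f (pw q) xi).
have jl : (i + d < l)%N by rewrite -addnS.
set j := Ordinal jl.
rewrite addnS (take_nth 0) ?size_tuple // adjoin_rcons.
apply: (@frob_adj1 _ _ _ pcL <<1 & take (i + d) alpha>>%AS Mi).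
  by apply: IH; exact: ltnW.
have ij : (i <= j)%N by rewrite leq_addr.
have ej := anti ij.
have := key_app j; rewrite (tnth_nth 0) /= => hk.
have := @frob_adjs _ _ _ pcL Mi (e i - e j) _ 1%AS _ _ _ hk.
rewrite -exprM -expnD subnKC //; apply.
  by move=> c c1; apply: subvP (sub1v Mi) _ _; rewrite rpredX.
move=> w /mapP [v vj ->]; rewrite /pw -exprM -expnD subnKC //.
apply: IH; first exact: ltnW.
exact: seqv_sub_adjoin.
Qed.

End Main.


Lemma S0_of (B : comNzRingType) (S : B -> Prop) :
  S 1 -> (forall x y, S x -> S y -> S (x - y)) -> S 0.
Proof. by move=> S1 SB; rewrite -(subrr 1); apply: SB. Qed.

Lemma SD_of (B : comNzRingType) (S : B -> Prop) :
  S 1 -> (forall x y, S x -> S y -> S (x - y)) ->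
  forall x y, S x -> S y -> S (x + y).
Proof.
move=> S1 SB x y Sx Sy; have -> : x + y = x - (0 - y) by rewrite sub0r opprK.
by apply: (SB) => //; apply: (SB) => //; exact: S0_of.
Qed.

Lemma i2_gen (F : fieldType) (L : fieldExtType F) (B : comNzRingType)
  (i1 i2 : {rmorphism L -> B}) (t1 : forall c : F, i1 c%:A = i2 c%:A)
  (S : B -> Prop) (S1 : S 1) (SB : forall x y, S x -> S y -> S (x - y))
  (SM : forall x y, S x -> S y -> S (x * y)) (Si1 : forall x, S (i1 x))
  (s : seq L) : (forall x, x \in s -> S (i2 x)) ->
  forall y, y \in <<1 & s>>%VS -> S (i2 y).
Proof.
have SD := SD_of S1 SB; have S0 := S0_of S1 SB.
have SX : forall x n, S x -> S (x ^+ n).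
  by move=> x n Sx; elim: n => [|n IH]; rewrite ?expr0 // exprS; apply: SM.
suff gen : forall K : {subfield L}, (forall y, y \in K -> S (i2 y)) ->
    (forall x, x \in s -> S (i2 x)) -> forall y, y \in <<K & s>>%VS -> S (i2 y).
  apply: (gen 1%AS) => y /vlineP [k ->].
  by rewrite -[k *: 1]/(k%:A) -t1.
elim: s => [|x s IH] K hK hs y.
  by rewrite Fadjoin_nil; apply: hK.
rewrite adjoin_cons => hy.
apply: (IH <<K; x>>%AS) hy => [c|z zs]; last by apply: hs; rewrite inE zs orbT.
move=> /Fadjoin_polyP [P PK ->].
rewrite -horner_map horner_coef.
elim/big_ind: _ => // i _.
apply: SM; last by apply: SX; apply: hs; rewrite mem_head.
by rewrite coef_map; apply: hK; exact: (polyOverP PK).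
Qed.

Unset Implicit Arguments.
Set Strict Implicit.

Theorem lemma2p7 (F : fieldType) (L : fieldExtType F) (p : nat)
  (pchar_p : p \in [pchar F])
  (insep : purely_inseparable (1%VS : {vspace L}) fullv)
  (l : nat) (alpha : l.-tuple L) (e : 'I_l -> nat)
  (normal_seq : normal_generating_sequence p alpha)
  (exps : exponent_sequence p alpha e)
  (B : comNzRingType) (i1 i2 : {rmorphism L -> B})
  (tensor : is_tensor_square i1 i2)
  (mu : {rmorphism B -> L})
  (mu1 : forall x, mu (i1 x) = x) (mu2 : forall x, mu (i2 x) = x) :
  let a := fun j : 'I_l => i2 (tnth alpha j) - i1 (tnth alpha j) in
  (forall u : B, mu u = 0 ->
     exists P : {mpoly L[l]}, u = (map_mpoly i1 P).@[a])
  /\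
  (forall (i : 'I_l) (u : B), mu u = 0 ->
     exists P : {mpoly L[i]},
       u ^+ (p ^ e i) =
         (map_mpoly i1 P).@[fun j : 'I_i =>
                              a (widen_ord (ltnW (ltn_ord i)) j) ^+ (p ^ e i)]
       /\ mu (u ^+ (p ^ e i)) = 0).
Proof.
move=> a.
have pcL : p \in [pchar L] by rewrite pchar_lalg.
have pcB : p \in [pchar B] := rmorph_pchar i1 pcL.
have t1 := tensor.1.
have img_closed : forall n (v : 'I_n -> B),
  let T := fun b => exists P : {mpoly L[n]}, b = (map_mpoly i1 P).@[v] in
  [/\ T 1, forall x y, T x -> T y -> T (x - y),
      forall x y, T x -> T y -> T (x * y), forall x, T (i1 x)
    & forall j, T (v j)].
  move=> n v T; split.
  - by exists 1; rewrite rmorph1 meval1.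
  - by move=> x y [P ->] [Q ->]; exists (P - Q); rewrite rmorphB mevalB.
  - by move=> x y [P ->] [Q ->]; exists (P * Q); rewrite rmorphM mevalM.
  - by move=> x; exists x%:MP; rewrite map_mpolyC mevalC.
  - by move=> j; exists 'X_j; rewrite map_mpolyX mevalXU.
split.
- move=> u _.
  have [T1 TB TM Ti1 Ta] := img_closed l a.
  apply: (gen_all T1 TB TM Ti1) tensor u => y.
  apply: (i2_gen t1 T1 TB TM Ti1 (s := alpha)).
    move=> x /tnthP [j ->].
    rewrite -(subrK (i1 (tnth alpha j)) (i2 (tnth alpha j))).
    by apply: (SD_of T1 TB); [exact: (Ta j) | exact: Ti1].
  have := normal_seq.2; rewrite /kpref take_oversize ?size_tuple // => ->.
  exact: memvf.
- move=> i u mu0.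
  set q := (p ^ e i)%N.
  set v := fun j : 'I_i => a (widen_ord (ltnW (ltn_ord i)) j) ^+ q.
  have [T1 TB TM Ti1 Tv] := img_closed i v.
  set T := fun b => exists P : {mpoly L[i]}, b = (map_mpoly i1 P).@[v] in T1 TB TM Ti1 Tv.
  have q_gt0 : (0 < q)%N := pk_gt0 pcL _.
  suff : T (u ^+ q).
    case=> P hP; exists P; split => //.
    by rewrite rmorphXn mu0 expr0n gtn_eqF.
  move: {mu0} u; apply: (@gen_all _ _ _ i1 i2 (fun b => T (b ^+ q))) tensor.
  - by rewrite expr1n.
  - by move=> x y Tx Ty; rewrite (frobkB pcB); apply: TB.
  - by move=> x y Tx Ty; rewrite exprMn; apply: TM.
  - by move=> x; rewrite -rmorphXn; apply: Ti1.
  move=> y; rewrite -rmorphXn.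
  apply: (i2_gen t1 T1 TB TM Ti1 (s := map (pw (p ^ e i)) (take i alpha))); last first.
    exact: powq.
  move=> z /mapP [w wi ->]; rewrite /pw rmorphXn.
  have sz : size (take i alpha) = i by rewrite size_takel // size_tuple ltnW.
  case/(nthP 0): wi => k; rewrite sz => ki <-.
  rewrite nth_take //.
  have kl : (k < l)%N by apply: ltn_trans ki _.
  have -> : nth 0 alpha k = tnth alpha (Ordinal kl) by rewrite (tnth_nth 0).
  rewrite -(subrK (i1 (tnth alpha (Ordinal kl))) (i2 (tnth alpha (Ordinal kl)))).
  rewrite (exprDn_pchar _ _ (pnat_pk pcB _)) -rmorphXn.
  apply: (SD_of T1 TB); last exact: Ti1.
  have := Tv (Ordinal ki); rewrite /v /=.
  by have -> : widen_ord (ltnW (ltn_ord i)) (Ordinal ki) = Ordinal kl by apply: val_inj.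
Qed.
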